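(* Let $P:\mathcal{C}^{\mathrm{op}}\to\mathbf{Pos}$ be a slat-doctrine such that every fibre $P(A)$ has finite joins and every reindexing map $P_f$ preserves them. Then every fibre $P^{un}(A)$ of the universal completion has finite joins and every reindexing map $P^{un}_f$ preserves them.
   Context: A slat-doctrine is a functor $P:\mathcal{C}^{\mathrm{op}}\to\mathbf{Pos}$ with $\mathcal{C}$ having finite products; $P_f:P(Y)\to P(X)$ is reindexing along $f:X\to Y$. Universal completion: $P^{un}(A)$ is the poset (reflection of the preorder) of triples $(A,B,\alpha)$ with $\alpha\in P(A\times B)$, where $(A,B,\alpha)\le(A,C,\beta)$ iff there is $g:A\times C\to B$ with $P_{\langle\mathrm{pr}_A,g\rangle}(\alpha)\le\beta$; for $f:A\to C$, $P^{un}_f(C,D,\gamma)=(A,D,P_{f\times 1_D}(\gamma))$. *)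

(* Defs.v *)
Set Implicit Arguments.
Unset Strict Implicit.

Record Cat := {
  ob :> Type;
  hom : ob -> ob -> Type;
  idm : forall A, hom A A;
  comp : forall A B C, hom B C -> hom A B -> hom A C;
  comp_id_l : forall A B (f : hom A B), comp (idm B) f = f;
  comp_id_r : forall A B (f : hom A B), comp f (idm A) = f;
  comp_assoc : forall A B C D (f : hom A B) (g : hom B C) (h : hom C D),
      comp h (comp g f) = comp (comp h g) f
}.
Arguments hom {c} _ _.
Arguments idm {c} _.
Arguments comp {c A B C} _ _.

Record FPCat := {
  cat :> Cat;
  term : cat;
  bang : forall A : cat, hom A term;
  bang_uniq : forall (A : cat) (f : hom A term), f = bang A;
  prod : cat -> cat -> cat;
  pr1 : forall A B : cat, hom (prod A B) A;
  pr2 : forall A B : cat, hom (prod A B) B;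
  pair : forall X A B : cat, hom X A -> hom X B -> hom X (prod A B);
  pair_pr1 : forall X A B (f : hom X A) (g : hom X B), comp (pr1 A B) (pair f g) = f;
  pair_pr2 : forall X A B (f : hom X A) (g : hom X B), comp (pr2 A B) (pair f g) = g;
  pair_uniq : forall X A B (f : hom X A) (g : hom X B) (h : hom X (prod A B)),
      comp (pr1 A B) h = f -> comp (pr2 A B) h = g -> h = pair f g
}.
Arguments term {f0} : rename.
Arguments bang {f0} _ : rename.
Arguments prod {f0} _ _ : rename.
Arguments pr1 {f0} _ _ : rename.
Arguments pr2 {f0} _ _ : rename.
Arguments pair {f0 X A B} _ _ : rename.

(** A slat-doctrine: a functor P : C^op -> Pos, C with finite products.
    [reix f] is the reindexing map P_f : P(Y) -> P(X) for f : X -> Y. *)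
Record Doctrine (C : FPCat) := {
  fib : C -> Type;
  le : forall A, fib A -> fib A -> Prop;
  le_refl : forall A (a : fib A), le a a;
  le_trans : forall A (a b c : fib A), le a b -> le b c -> le a c;
  le_antisym : forall A (a b : fib A), le a b -> le b a -> a = b;
  reix : forall (X Y : C), hom X Y -> fib Y -> fib X;
  reix_mono : forall X Y (f : hom X Y) (a b : fib Y), le a b -> le (reix f a) (reix f b);
  reix_id : forall A (a : fib A), reix (idm A) a = a;
  reix_comp : forall X Y Z (f : hom X Y) (g : hom Y Z) (a : fib Z),
      reix (comp g f) a = reix f (reix g a)
}.
Arguments fib {C} _ _.
Arguments le {C} _ {A} _ _.
Arguments reix {C} _ {X Y} _ _.

(** Finite joins (bottom + binary joins), stated for a preorder [le];
    for a poset this is the usual notion, and for a preorder it is exactly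
    the notion of finite joins in its poset reflection. *)
Definition is_bot {T} (le : T -> T -> Prop) (b : T) := forall x, le b x.
Definition is_join {T} (le : T -> T -> Prop) (x y z : T) :=
  le x z /\ le y z /\ forall w, le x w -> le y w -> le z w.
Definition has_finite_joins {T} (le : T -> T -> Prop) :=
  (exists b, is_bot le b) /\ (forall x y, exists z, is_join le x y z).
Definition preserves_finite_joins {T U} (leT : T -> T -> Prop)
  (leU : U -> U -> Prop) (f : T -> U) :=
  (forall b, is_bot leT b -> is_bot leU (f b)) /\
  (forall x y z, is_join leT x y z -> is_join leU (f x) (f y) (f z)).

Definition doctrine_finite_joins {C : FPCat} (P : Doctrine C) :=
  (forall A : C, has_finite_joins (@le C P A)) /\
  (forall (X Y : C) (f : hom X Y),
      preserves_finite_joins (@le C P Y) (@le C P X) (reix P f)).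

(** Universal completion. Elements of P^un(A) are triples (A, B, alpha) with
    alpha in P(A x B); we keep the preorder and do not quotient. *)
Definition un_el {C : FPCat} (P : Doctrine C) (A : C) :=
  { B : C & fib P (prod A B) }.

Definition un_le {C : FPCat} (P : Doctrine C) (A : C) (x y : un_el P A) : Prop :=
  exists g : hom (prod A (projT1 y)) (projT1 x),
    le P (reix P (pair (pr1 A (projT1 y)) g) (projT2 x)) (projT2 y).

Definition prod_map {C : FPCat} {A B : C} (f : hom A B) (D : C)
  : hom (prod A D) (prod B D) :=
  pair (comp f (pr1 A D)) (pr2 A D).

Definition un_reix {C : FPCat} (P : Doctrine C) {A B : C} (f : hom A B)
  (y : un_el P B) : un_el P A :=
  existT _ (projT1 y) (reix P (prod_map f (projT1 y)) (projT2 y)).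

Definition un_finite_joins {C : FPCat} (P : Doctrine C) :=
  (forall A : C, has_finite_joins (@un_le C P A)) /\
  (forall (X Y : C) (f : hom X Y),
      preserves_finite_joins (@un_le C P Y) (@un_le C P X) (@un_reix C P X Y f)).

(* Main.v *)
Require Import Defs.

Section S.
Variable C : FPCat.

Lemma prod_ext (X A B : C) (h h' : hom X (prod A B)) :
  comp (pr1 A B) h = comp (pr1 A B) h' -> comp (pr2 A B) h = comp (pr2 A B) h' -> h = h'.
Proof.
  intros H1 H2. rewrite (pair_uniq H1 H2). symmetry. apply pair_uniq; reflexivity.
Qed.

Lemma pair_comp (X Y A B : C) (f : hom Y A) (g : hom Y B) (h : hom X Y) :
  comp (pair f g) h = pair (comp f h) (comp g h).
Proof.
  apply pair_uniq; rewrite comp_assoc; [rewrite pair_pr1 | rewrite pair_pr2]; reflexivity.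
Qed.

Lemma pair_pr1' (X Y A B : C) (f : hom Y A) (g : hom Y B) (h : hom X Y) :
  comp (pr1 A B) (comp (pair f g) h) = comp f h.
Proof. rewrite comp_assoc, pair_pr1; reflexivity. Qed.
Lemma pair_pr2' (X Y A B : C) (f : hom Y A) (g : hom Y B) (h : hom X Y) :
  comp (pr2 A B) (comp (pair f g) h) = comp g h.
Proof. rewrite comp_assoc, pair_pr2; reflexivity. Qed.

End S.

Ltac norm := unfold prod_map; repeat progress (rewrite <- ?comp_assoc, ?pair_comp, ?pair_pr1, ?pair_pr2,
  ?pair_pr1', ?pair_pr2', ?comp_id_l, ?comp_id_r).

Section T.
Variable C : FPCat.
Variable P : Doctrine C.
Hypothesis HP : doctrine_finite_joins P.

Definition k1 (A B D : C) : hom (prod A (prod B D)) (prod A B) :=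
  pair (pr1 A (prod B D)) (comp (pr1 B D) (pr2 A (prod B D))).
Definition k2 (A B D : C) : hom (prod A (prod B D)) (prod A D) :=
  pair (pr1 A (prod B D)) (comp (pr2 B D) (pr2 A (prod B D))).

Lemma un_trans A (x y z : un_el P A) : un_le x y -> un_le y z -> un_le x z.
Proof.
  destruct x as [B a], y as [D b], z as [E c]; unfold un_le in *; cbn [projT1 projT2] in *.
  intros [g Hg] [h Hh]. exists (comp g (pair (pr1 A E) h)).
  eapply le_trans; [|exact Hh].
  assert (e : pair (pr1 A E) (comp g (pair (pr1 A E) h)) = comp (pair (pr1 A D) g) (pair (pr1 A E) h)).
  { norm. reflexivity. }
  rewrite e, reix_comp. apply reix_mono. exact Hg.
Qed.

Lemma un_refl A (x : un_el P A) : un_le x x.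
Proof.
  destruct x as [B a]; unfold un_le; cbn [projT1 projT2]. exists (pr2 A B).
  assert (e : pair (pr1 A B) (pr2 A B) = idm (prod A B)).
  { symmetry. apply pair_uniq; apply comp_id_r. }
  rewrite e, reix_id. apply le_refl.
Qed.

Lemma un_mono X Y (f : hom X Y) (x y : un_el P Y) :
  un_le x y -> un_le (un_reix f x) (un_reix f y).
Proof.
  destruct x as [B a], y as [D b]; unfold un_le, un_reix in *; cbn [projT1 projT2] in *. intros [g Hg].
  exists (comp g (prod_map f D)); cbn [projT1 projT2] in *.
  rewrite <- reix_comp.
  assert (e : comp (prod_map f B) (pair (pr1 X D) (comp g (prod_map f D)))
     = comp (pair (pr1 Y D) g) (prod_map f D)).
  { norm. reflexivity. }
  rewrite e, reix_comp. apply reix_mono. exact Hg.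
Qed.

Lemma bot_un A (b : fib P (prod A term)) : is_bot (le P) b ->
  is_bot (@un_le C P A) (existT _ term b).
Proof.
  intros Hb [D d]. unfold un_le; cbn [projT1 projT2]. exists (bang _).
  destruct HP as [_ HR]. destruct (HR _ _ (pair (pr1 A D) (bang (prod A D)))) as [Hbot _].
  apply (Hbot _ Hb).
Qed.

Lemma join_un A (x y : un_el P A) g :
  is_join (le P) (reix P (k1 A (projT1 x) (projT1 y)) (projT2 x))
                 (reix P (k2 A (projT1 x) (projT1 y)) (projT2 y)) g ->
  is_join (@un_le C P A) x y (existT _ (prod (projT1 x) (projT1 y)) g).
Proof.
  destruct x as [B a], y as [D b]; cbn [projT1 projT2] in *. intros [J1 [J2 J3]]. unfold un_le; cbn [projT1 projT2].
  split; [|split].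
  - exists (comp (pr1 B D) (pr2 A (prod B D))). exact J1.
  - exists (comp (pr2 B D) (pr2 A (prod B D))). exact J2.
  - intros [E c] [g1 H1] [g2 H2]. cbn [projT1 projT2] in *. exists (pair g1 g2).
    destruct HP as [_ HR]. destruct (HR _ _ (pair (pr1 A E) (pair g1 g2))) as [_ Hj].
    destruct (Hj _ _ _ (conj J1 (conj J2 J3))) as [_ [_ K]].
    apply K; rewrite <- reix_comp.
    + assert (e : comp (k1 A B D) (pair (pr1 A E) (pair g1 g2)) = pair (pr1 A E) g1).
      { unfold k1. norm. reflexivity. }
      rewrite e. exact H1.
    + assert (e : comp (k2 A B D) (pair (pr1 A E) (pair g1 g2)) = pair (pr1 A E) g2).
      { unfold k2. norm. reflexivity. }
      rewrite e. exact H2.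
Qed.

Lemma join_equiv A (x y j z : un_el P A) : is_join (@un_le C P A) x y j ->
  un_le j z -> un_le z j -> is_join (@un_le C P A) x y z.
Proof.
  intros [J1 [J2 J3]] Hjz Hzj. split; [|split].
  - eapply un_trans; eauto.
  - eapply un_trans; eauto.
  - intros w H1 H2. eapply un_trans; [exact Hzj|]. apply J3; auto.
Qed.

Lemma un_join_exists A (x y : un_el P A) :
  exists g, is_join (@un_le C P A) x y (existT _ (prod (projT1 x) (projT1 y)) g).
Proof.
  destruct HP as [HJ _]. destruct (HJ (prod A (prod (projT1 x) (projT1 y)))) as [_ Hj].
  destruct (Hj (reix P (k1 A (projT1 x) (projT1 y)) (projT2 x))
               (reix P (k2 A (projT1 x) (projT1 y)) (projT2 y))) as [g Hg].
  exists g. apply join_un. exact Hg.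
Qed.

Lemma reix_join X Y (f : hom X Y) (x y : un_el P Y) g :
  is_join (le P) (reix P (k1 Y (projT1 x) (projT1 y)) (projT2 x))
                 (reix P (k2 Y (projT1 x) (projT1 y)) (projT2 y)) g ->
  is_join (@un_le C P X) (un_reix f x) (un_reix f y)
     (un_reix f (existT _ (prod (projT1 x) (projT1 y)) g)).
Proof.
  destruct x as [B a], y as [D b]; cbn [projT1 projT2] in *. intros Hg.
  destruct HP as [_ HR]. destruct (HR _ _ (prod_map f (prod B D))) as [_ Hj].
  pose proof (Hj _ _ _ Hg) as H. unfold un_reix; cbn [projT1 projT2].
  apply (@join_un X (existT _ B (reix P (prod_map f B) a))
                 (existT _ D (reix P (prod_map f D) b))); cbn [projT1 projT2].
  rewrite <- !reix_comp in H. rewrite <- !reix_comp.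
  assert (e1 : comp (k1 Y B D) (prod_map f (prod B D)) = comp (prod_map f B) (k1 X B D)).
  { unfold k1. norm. reflexivity. }
  assert (e2 : comp (k2 Y B D) (prod_map f (prod B D)) = comp (prod_map f D) (k2 X B D)).
  { unfold k2. norm. reflexivity. }
  rewrite <- e1, <- e2. exact H.
Qed.

Lemma main : un_finite_joins P.
Proof.
  split.
  - intros A. split.
    + destruct HP as [HJ _]. destruct (HJ (prod A term)) as [[b Hb] _].
      exists (existT _ term b). apply bot_un; exact Hb.
    + intros x y. destruct (@un_join_exists A x y) as [g Hg]. eexists; exact Hg.
  - intros X Y f. split.
    + intros b Hb.
      destruct HP as [HJ HR]. destruct (HJ (prod Y term)) as [[b0 Hb0] _].
      destruct (HR _ _ (prod_map f term)) as [Hbot _].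
      pose proof (@bot_un X _ (Hbot _ Hb0)) as B1.
      intros w. eapply un_trans; [exact (@un_mono X Y f b (existT _ term b0) (Hb _))|]. apply B1.
    + intros x y z Hz.
      destruct HP as [HJ _]. destruct (HJ (prod Y (prod (projT1 x) (projT1 y)))) as [_ Hj].
      destruct (Hj (reix P (k1 Y (projT1 x) (projT1 y)) (projT2 x))
               (reix P (k2 Y (projT1 x) (projT1 y)) (projT2 y))) as [g Hg].
      pose proof (@join_un Y x y g Hg) as Jj.
      pose proof (@reix_join X Y f x y g Hg) as Jf.
      destruct Hz as [Z1 [Z2 Z3]]. destruct Jj as [W1 [W2 W3]].
      eapply join_equiv; [exact Jf | |].
      * apply un_mono. apply W3; assumption.
      * apply un_mono. apply Z3; assumption.
Qed.

End T.

Theorem proposition3 (C : FPCat) (P : Doctrine C) :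
  doctrine_finite_joins P -> un_finite_joins P.
Proof.
  intros HP. exact (@main C P HP).
Qed.
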